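(* Let $\mathbb{F}$ be a field with $\mathrm{char}(\mathbb{F})\neq 2$, and let $L$ be a finite-dimensional pure, nonnilpotent, solvable Lie algebra over $\mathbb{F}$ of breadth $1$. Then $L$ has a basis $\{x,y\}$ such that $[x,y]=x$.
   Context: For $x\in L$, $b(x)=\mathrm{rank}(\mathrm{ad}_x)$ and $b(L)=\max\{b(x)\mid x\in L\}$ is the breadth of $L$. $L$ is pure if it has no abelian ideal as a direct summand; equivalently $Z(L)\subseteq[L,L]$, where $Z(L)$ is the center. *)

(* Defs.v *)
From HB Require Import structures.
From mathcomp Require Import all_boot all_order all_algebra.
Set Implicit Arguments. Unset Strict Implicit. Unset Printing Implicit Defensive.
Import GRing.Theory.
Local Open Scope ring_scope.


Definition is_lie_bracket (F : fieldType) (V : vectType F) (br : V -> V -> V) : Prop :=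
  [/\ (forall (a : F) (x y z : V), br (a *: x + y) z = a *: br x z + br y z),
      (forall (a : F) (x y z : V), br z (a *: x + y) = a *: br z x + br z y),
      (forall x : V, br x x = 0) &
      (forall x y z : V, br x (br y z) + br y (br z x) + br z (br x y) = 0)].

(* [U, W] : the subspace spanned by all brackets [u, w], u in U, w in W
   (spanned by brackets of basis vectors, by bilinearity) *)
Definition lie_brs (F : fieldType) (V : vectType F) (br : V -> V -> V)
  (U W : {vspace V}) : {vspace V} :=
  (<<[seq br u w | u <- vbasis U, w <- vbasis W]>>)%VS.

Definition derived_alg (F : fieldType) (V : vectType F) (br : V -> V -> V) :=
  lie_brs br fullv fullv.

Definition in_center (F : fieldType) (V : vectType F) (br : V -> V -> V) (z : V) :=
  forall y : V, br z y = 0.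

Definition lie_pure (F : fieldType) (V : vectType F) (br : V -> V -> V) :=
  forall z : V, in_center br z -> z \in derived_alg br.

Definition derived_series (F : fieldType) (V : vectType F) (br : V -> V -> V)
  (k : nat) : {vspace V} := iter k (fun U => lie_brs br U U) fullv%VS.

Definition lie_solvable (F : fieldType) (V : vectType F) (br : V -> V -> V) :=
  exists k, derived_series br k = 0%VS.

Definition lower_central (F : fieldType) (V : vectType F) (br : V -> V -> V)
  (k : nat) : {vspace V} := iter k (fun U => lie_brs br fullv U) fullv.

Definition lie_nilpotent (F : fieldType) (V : vectType F) (br : V -> V -> V) :=
  exists k, lower_central br k = 0%VS.

Definition lie_b (F : fieldType) (V : vectType F) (br : V -> V -> V) (x : V) : nat :=
  \dim (limg (linfun (br x))).

Definition has_breadth (F : fieldType) (V : vectType F) (br : V -> V -> V) (n : nat) :=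
  (exists x : V, lie_b br x = n) /\ (forall x : V, (lie_b br x <= n)%N).

(* Main.v *)
Require Import Defs.
From HB Require Import structures.
From mathcomp Require Import all_boot all_order all_algebra.
From Stdlib Require Import Classical.
Import GRing.Theory.
Local Open Scope ring_scope.
Set Implicit Arguments.

Lemma lfunE_gen (F : fieldType) (V: vectType F) (f : V -> V)
  (hf : forall (a : F) u v, f (a *: u + v) = a *: f u + f v) u : linfun f u = f u.
Proof.
pose fL : {linear V -> V} := HB.pack f (GRing.isLinear.Build F V V *:%R f hf).
exact: (lfunE fL u).
Qed.

Section Basics.
Lemma brDl (F : fieldType) (V : vectType F) (br : V -> V -> V) :
  is_lie_bracket br -> forall x y z, br (x + y) z = br x z + br y z.
Proof. by case=> Hl _ _ _ x y z; have := Hl 1 x y z; rewrite !scale1r. Qed.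
Lemma brDr (F : fieldType) (V : vectType F) (br : V -> V -> V) :
  is_lie_bracket br -> forall x y z, br z (x + y) = br z x + br z y.
Proof. by case=> _ Hr _ _ x y z; have := Hr 1 x y z; rewrite !scale1r. Qed.
Lemma br0l (F : fieldType) (V : vectType F) (br : V -> V -> V) :
  is_lie_bracket br -> forall z, br 0 z = 0.
Proof.
move=> Hb z; have h := brDl Hb 0 0 z; rewrite addr0 in h.
by apply: (addrI (br 0 z)); rewrite -h addr0.
Qed.
Lemma br0r (F : fieldType) (V : vectType F) (br : V -> V -> V) :
  is_lie_bracket br -> forall z, br z 0 = 0.
Proof.
move=> Hb z; have h := brDr Hb 0 0 z; rewrite addr0 in h.
by apply: (addrI (br z 0)); rewrite -h addr0.
Qed.
Lemma brZl (F : fieldType) (V : vectType F) (br : V -> V -> V) :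
  is_lie_bracket br -> forall a x z, br (a *: x) z = a *: br x z.
Proof.
move=> Hb a x z; case: (Hb) => Hl _ _ _; have := Hl a x 0 z.
by rewrite !addr0 br0l // addr0.
Qed.
Lemma brZr (F : fieldType) (V : vectType F) (br : V -> V -> V) :
  is_lie_bracket br -> forall a x z, br z (a *: x) = a *: br z x.
Proof.
move=> Hb a x z; case: (Hb) => _ Hr _ _; have := Hr a x 0 z.
by rewrite !addr0 br0r // addr0.
Qed.
Lemma brNl (F : fieldType) (V : vectType F) (br : V -> V -> V) :
  is_lie_bracket br -> forall x z, br (- x) z = - br x z.
Proof. by move=> Hb x z; rewrite -scaleN1r brZl // scaleN1r. Qed.
Lemma brNr (F : fieldType) (V : vectType F) (br : V -> V -> V) :
  is_lie_bracket br -> forall x z, br z (- x) = - br z x.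
Proof. by move=> Hb x z; rewrite -scaleN1r brZr // scaleN1r. Qed.
Lemma brA (F : fieldType) (V : vectType F) (br : V -> V -> V) :
  is_lie_bracket br -> forall x y, br x y = - br y x.
Proof.
move=> Hb x y; case: (Hb) => _ _ Hxx _; have := Hxx (x + y).
rewrite (brDl Hb) !(brDr Hb) !Hxx add0r addr0 => /eqP; rewrite addr_eq0 => /eqP.
by [].
Qed.
End Basics.

Lemma rank1 (F : fieldType) (V : vectType F) (br : V -> V -> V) :
  is_lie_bracket br -> (forall x, (lie_b br x <= 1)%N) ->
  forall x v w, br x v != 0 -> exists k, br x w = k *: br x v.
Proof.
move=> Hb Hr x v w nz.
have lin : forall (a : F) u v, br x (a *: u + v) = a *: br x u + br x v.
  by case: Hb => _ H _ _ a u v'; apply: H.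
have E := (@lfunE_gen _ _ _ lin).
have memI : forall u, br x u \in limg (linfun (br x)).
  by move=> u; rewrite -E; apply: memv_img; exact: memvf.
have sub : (<[br x v]> <= limg (linfun (br x)))%VS by rewrite -memvE.
have eq : (<[br x v]> == limg (linfun (br x)))%VS.
  by rewrite eqEdim sub dim_vline nz /=; exact: Hr x.
by move/eqP: eq => eq; have := memI w; rewrite -eq => /vlineP.
Qed.

Lemma caseA (F : fieldType) (V : vectType F) (br : V -> V -> V) :
  is_lie_bracket br -> (forall x, (lie_b br x <= 1)%N) -> lie_pure br ->
  forall x a, a != 0 -> br x a = a ->
  exists x y : V, basis_of fullv [:: x; y] /\ br x y = x.
Proof.
move=> Hb Hr Hp x a anz hxa.
case: (Hb) => _ _ Hxx HJ.
have hx : forall w, exists al, br x w = al *: a.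
  by move=> w; have [|k ->] := rank1 Hb Hr x a w; rewrite hxa //; exists k.
have ha : forall w, exists be, br a w = be *: a.
  move=> w; have [|k ->] := rank1 Hb Hr a x w.
    by rewrite (brA Hb) hxa oppr_eq0.
  by exists (- k); rewrite (brA Hb) hxa scalerN scaleNr.
have cent : forall z, br x z = 0 -> br z a = 0 -> forall w, br z w = 0.
  move=> z hxz hza w.
  have [|k hk] := rank1 Hb Hr (x + z) a w.
    by rewrite (brDl Hb) hxa hza addr0.
  rewrite !(brDl Hb) hxa hza addr0 in hk.
  have [al hal] := hx w.
  have hzw : br z w = (k - al) *: a.
    by rewrite scalerBl -hal -hk addrC addKr.
  have := HJ x z w.
  rewrite hzw (brZr Hb) hxa [br w x](brA Hb) hal (brNr Hb) (brZr Hb) hza hxz (br0r Hb).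
  rewrite scaler0 oppr0 !addr0 => /eqP; rewrite scaler_eq0 (negbTE anz) orbF.
  by move/eqP => ->; rewrite scale0r.
have dec : forall u, exists z al be, (forall w, br z w = 0) /\
    u = z + al *: a + be *: x.
  move=> u; have [al hal] := hx u.
  have [be hbe] := ha (u - al *: a).
  exists (u - al *: a + be *: x), al, (- be); split; last first.
    by rewrite scaleNr -[u - _ + _ + _]addrA [be *: x + _]addrC addrA addrK subrK.
  apply: cent.
    by rewrite !(brDr Hb) (brNr Hb) !(brZr Hb) hxa hal Hxx scaler0 addr0 subrr.
  by rewrite (brDl Hb) (brZl Hb) hxa [br _ a](brA Hb) hbe addrC subrr.
have der : forall u w, br u w \in <[a]>%VS.
  move=> u w; have [z [al [be [hz ->]]]] := dec u.
  have [al' hal'] := hx w; have [be' hbe'] := ha w.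
  rewrite !(brDl Hb) hz !(brZl Hb) hal' hbe' add0r.
  by apply: memvD; apply: memvZ; apply: memvZ; exact: memv_line.
have dsub : (derived_alg br <= <[a]>)%VS.
  by apply/span_subvP => t /allpairsP [[u w] [_ _ ->]]; exact: der.
have dec2 : forall u, exists al be, u = al *: a + be *: x.
  move=> u; have [z [al [be [hz ->]]]] := dec u.
  have : z \in <[a]>%VS by apply: (subvP dsub); apply: Hp.
  case/vlineP => e he.
  have : br x z = 0 by rewrite (brA Hb) hz oppr0.
  rewrite he (brZr Hb) hxa => /eqP; rewrite scaler_eq0 (negbTE anz) orbF.
  move/eqP => e0; exists al, be; by rewrite e0 scale0r add0r.
have xnz : x != 0 by apply/eqP => x0; move: hxa; rewrite x0 (br0l Hb) => a0; move: anz; rewrite -a0 eqxx.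
exists a, (- x); split; last by rewrite (brNr Hb) (brA Hb) opprK hxa.
rewrite /basis_of span_cons span_seq1 free_cons span_seq1 free_cons span_nil memv0 oppr_eq0 xnz.
rewrite /= eqEsubv subvf nil_free andbT /=; apply/andP; split.
  apply/subvP => u _; have [al [be ->]] := dec2 u.
  have -> : be *: x = (- be) *: (- x) by rewrite scalerN scaleNr opprK.
  by apply: memv_add; apply: memvZ; exact: memv_line.
apply/negP => /vlineP [k hk].
move: hxa; rewrite hk (brZr Hb) (brNr Hb) Hxx oppr0 scaler0 => a0.
by move: anz; rewrite hk -a0 eqxx.
Qed.

Unset Implicit Arguments.
Theorem corollary2p7 (F : fieldType) (V : vectType F) (br : V -> V -> V) :
  2%N \notin [pchar F] ->
  is_lie_bracket br ->
  lie_pure br -> ~ lie_nilpotent br -> lie_solvable br ->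
  has_breadth br 1 ->
  exists x y : V, basis_of fullv [:: x; y] /\ br x y = x.
Proof.
move=> _ Hb Hp Hnil _ [_ Hr].
case: (classic (exists x w, br x (br x w) != 0)) => [[x0 [w hw]] | hno].
  set b := br x0 w in hw; set a := br x0 b in hw.
  have [c hc] := rank1 Hb Hr x0 b a hw.
  have [k hk] := rank1 Hb Hr x0 b w hw.
  rewrite -/b -/a in hk hc.
  have cnz : c != 0.
    apply/eqP => c0; move: hw; rewrite /a hk (brZr Hb) hc c0 scale0r scaler0 eqxx.
    by [].
  apply: (@caseA _ _ _ Hb Hr Hp (c^-1 *: x0) a hw).
  by rewrite (brZl Hb) hc scalerA mulVf // scale1r.
have h0 : forall x w, br x (br x w) = 0.
  move=> x w; apply/eqP; apply/negPn/negP => h; apply: hno; exists x, w; exact: h.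
have anti : forall x y z, br x (br y z) = - br y (br x z).
  move=> x y z; have := h0 (x + y) z.
  rewrite !(brDl Hb) !(brDr Hb) !h0 add0r addr0 => /eqP; rewrite addr_eq0 => /eqP.
  by [].
have T : forall x y z, br x (br y z) = 0.
  move=> x y z; apply/eqP; apply/negPn/negP => nz.
  have nz2 : br y (br x z) != 0 by rewrite -oppr_eq0 -anti.
  have [k hk] := rank1 Hb Hr y (br x z) z nz2.
  move: nz; rewrite hk (brZr Hb) anti h0 (br0r Hb) oppr0 scaler0 eqxx.
  by [].
exfalso; apply: Hnil; exists 2%N; rewrite /lower_central /=.
apply/eqP; rewrite -subv0; apply/span_subvP => t /allpairsP [[u w] [_ /= hw ->]].
have lin : forall (a : F) p q, br u (a *: p + q) = a *: br u p + br u q.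
  by case: Hb => _ H _ _ a p q; apply: H.
have sub : (lie_brs br fullv fullv <= lker (linfun (br u)))%VS.
  apply/span_subvP => s /allpairsP [[p q] [_ _ ->]].
  by rewrite memv_ker ((@lfunE_gen _ _ _ lin)) T.
have := subvP sub w (vbasis_mem hw).
by rewrite memv_ker ((@lfunE_gen _ _ _ lin)) memv0.
Qed.
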